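(* Let $h=(X,E,\mathit{in})$ be a flow graph over a flow monoid $\mathbb{M}$ and let $Y,Z\subseteq\mathbb{N}$. Then (i) $(h|_Y).\mathit{flow}=(h.\mathit{flow})|_{Y}$ (i.e. restricted to $X\cap Y$); (ii) $h|_Y\# h|_{X\setminus Y}$ and $h|_Y*h|_{X\setminus Y}=h$; (iii) $(h|_Y)|_Z=h|_{Y\cap Z}$.
   Context: A flow monoid is a commutative monoid $(\mathbb{M},+,0)$ such that $n\le m :\iff \exists o.\ m=n+o$ is a partial order in which every ascending chain $K$ has a least upper bound $\bigsqcup K$, and $n+\bigsqcup K=\bigsqcup(n+K)$. $\mathcal{C}(\mathbb{M}\to\mathbb{M})$ is the set of functions commuting with least upper bounds of ascending chains. Infinite sums denote least upper bounds of finite partial sums. A flow graph is $h=(X,E,\mathit{in})$ with $X\subseteq\mathbb{N}$ finite, $E:X\times\mathbb{N}\to\mathcal{C}(\mathbb{M}\to\mathbb{M})$, $\mathit{in}:(\mathbb{N}\setminus X)\times X\to\mathbb{M}$; $\mathit{in}_x=\sum_{y\in\mathbb{N}\setminus X}\mathit{in}(y,x)$; the flow $h.\mathit{flow}$ is the least $\mathit{flow}:X\to\mathbb{M}$ with $\mathit{flow}(x)=\mathit{in}_x+\sum_{y\in X}E(y,x)(\mathit{flow}(y))$; the outflow is $h.\mathit{out}(x,y)=E(x,y)(h.\mathit{flow}(x))$ for $x\in X$, $y\notin X$. Composition: $h_1\#\#h_2$ iff $X_1\cap X_2=\emptyset$ and for all $x\in X_1,y\in X_2$, $h_1.\mathit{out}(x,y)=h_2.\mathit{in}(x,y)$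 and $h_2.\mathit{out}(y,x)=h_1.\mathit{in}(y,x)$; $h_1\uplus h_2=(X_1\uplus X_2,E_1\uplus E_2,(\mathit{in}_1\uplus\mathit{in}_2)|_{(\mathbb{N}\setminus(X_1\uplus X_2))\times(X_1\uplus X_2)})$; $h_1\# h_2$ iff $h_1\#\#h_2$ and $h_1.\mathit{flow}\uplus h_2.\mathit{flow}=(h_1\uplus h_2).\mathit{flow}$, and then $h_1*h_2=h_1\uplus h_2$. Restriction: for $Y\subseteq\mathbb{N}$, $h|_Y=(X\cap Y,\ E|_{(X\cap Y)\times\mathbb{N}},\ \mathit{in}')$ where $\mathit{in}'(z,y)=\mathit{in}(z,y)$ for $z\in\mathbb{N}\setminus X$, $y\in X\cap Y$, and $\mathit{in}'(x,y)=E(x,y)(h.\mathit{flow}(x))$ for $x\in X\setminus Y$, $y\in X\cap Y$. *)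

(* Defs.v *)
From HB Require Import structures.
From mathcomp Require Import all_boot finmap.
From Stdlib Require Import ClassicalEpsilon.

Set Implicit Arguments.
Unset Strict Implicit.
Unset Printing Implicit Defensive.

Local Open Scope fset_scope.

Definition pre_le {T : Type} (add : T -> T -> T) (a b : T) : Prop :=
  exists o, b = add a o.

Definition pre_ascending {T : Type} (add : T -> T -> T) (c : nat -> T) : Prop :=
  forall i, pre_le add (c i) (c i.+1).

Definition pre_is_lub {T : Type} (add : T -> T -> T) (c : nat -> T) (l : T) : Prop :=
  (forall i, pre_le add (c i) l) /\
  (forall u, (forall i, pre_le add (c i) u) -> pre_le add l u).

Record flowMonoid := FlowMonoid {
  fm_car :> Type;
  fm_add : fm_car -> fm_car -> fm_car;
  fm_zero : fm_car;
  fm_addC : forall a b, fm_add a b = fm_add b a;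
  fm_addA : forall a b c, fm_add a (fm_add b c) = fm_add (fm_add a b) c;
  fm_add0 : forall a, fm_add fm_zero a = a;
  fm_le_antisym : forall a b, pre_le fm_add a b -> pre_le fm_add b a -> a = b;
  fm_lub_ex : forall c, pre_ascending fm_add c -> exists l, pre_is_lub fm_add c l;
  fm_add_lub : forall n c l, pre_ascending fm_add c -> pre_is_lub fm_add c l ->
                 pre_is_lub fm_add (fun i => fm_add n (c i)) (fm_add n l)
}.

Section FlowMonoidOps.
Variable M : flowMonoid.

Definition mle (a b : M) : Prop := pre_le (@fm_add M) a b.
Definition ascending (c : nat -> M) : Prop := pre_ascending (@fm_add M) c.
Definition is_lub (c : nat -> M) (l : M) : Prop := pre_is_lub (@fm_add M) c l.

Definition lub (c : nat -> M) : M :=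
  epsilon (inhabits (fm_zero M)) (is_lub c).

Definition continuous (f : M -> M) : Prop :=
  forall c l, ascending c -> is_lub c l -> is_lub (fun i => f (c i)) (f l).

Definition zerof : M -> M := fun _ => fm_zero M.

Definition sumM (s : seq nat) (F : nat -> M) : M :=
  foldr (fun y acc => fm_add (F y) acc) (fm_zero M) s.

End FlowMonoidOps.

Definition inb (Y : nat -> Prop) (x : nat) : bool :=
  if excluded_middle_informative (Y x) then true else false.

(* h = (X, E, in).  E and in are total functions; only their values on
   X x N, resp. (N \ X) x X are meaningful (see fg_wf). *)
Record flowGraph (M : flowMonoid) := FlowGraph {
  fg_X : {fset nat};
  fg_E : nat -> nat -> M -> M;
  fg_in : nat -> nat -> M
}.

Section FlowGraphs.
Variable M : flowMonoid.
Implicit Types h : flowGraph M.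

(* Well-formedness: E : X x N -> C(M -> M), in : (N\X) x X -> M, and the
   (meaningless) values outside these domains are normalised to 0. *)
Definition fg_wf h : Prop :=
  (forall x y, x \in fg_X h -> continuous (fg_E h x y)) /\
  (forall x y, x \notin fg_X h -> fg_E h x y = @zerof M) /\
  (forall z x, (z \in fg_X h) || (x \notin fg_X h) -> fg_in h z x = fm_zero M).

(* in_x = sum_{y in N \ X} in(y, x), as lub of the finite partial sums *)
Definition inflow h (x : nat) : M :=
  lub (fun n => sumM [seq y <- iota 0 n | y \notin fg_X h] (fun y => fg_in h y x)).

(* flow : X -> M, represented as nat -> M with value 0 outside X *)
Definition is_flow h (f : nat -> M) : Prop :=
  (forall x, x \notin fg_X h -> f x = fm_zero M) /\
  (forall x, x \in fg_X h ->
     f x = fm_add (inflow h x) (sumM (enum_fset (fg_X h)) (fun y => fg_E h y x (f y)))).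

Definition is_least_flow h (f : nat -> M) : Prop :=
  is_flow h f /\ forall g, is_flow h g -> forall x, x \in fg_X h -> mle (f x) (g x).

Definition flow h : nat -> M :=
  epsilon (inhabits (fun _ : nat => fm_zero M)) (is_least_flow h).

Definition outflow h (x y : nat) : M := fg_E h x y (flow h x).

Definition compat h1 h2 : Prop :=
  fg_X h1 `&` fg_X h2 = fset0 /\
  (forall x y, x \in fg_X h1 -> y \in fg_X h2 ->
     outflow h1 x y = fg_in h2 x y /\ outflow h2 y x = fg_in h1 y x).

Definition fg_union h1 h2 : flowGraph M :=
  let X := fg_X h1 `|` fg_X h2 in
  FlowGraph X
    (fun x y => if x \in fg_X h1 then fg_E h1 x y
                else if x \in fg_X h2 then fg_E h2 x y else @zerof M)
    (fun z x => if (x \in X) && (z \notin X) then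
                  (if x \in fg_X h1 then fg_in h1 z x else fg_in h2 z x)
                else fm_zero M).

Definition flow_union h1 h2 (f1 f2 : nat -> M) : nat -> M :=
  fun x => if x \in fg_X h1 then f1 x else if x \in fg_X h2 then f2 x else fm_zero M.

Definition fg_sep h1 h2 : Prop :=
  compat h1 h2 /\ flow_union h1 h2 (flow h1) (flow h2) = flow (fg_union h1 h2).

Definition fg_star h1 h2 : option (flowGraph M) :=
  if excluded_middle_informative (fg_sep h1 h2) then Some (fg_union h1 h2) else None.

Definition fcap (X : {fset nat}) (Y : nat -> Prop) : {fset nat} :=
  [fset x in X | inb Y x].

Definition restrict h (Y : nat -> Prop) : flowGraph M :=
  let X := fg_X h in
  let XY := fcap X Y in
  FlowGraph XY
    (fun x y => if x \in XY then fg_E h x y else @zerof M)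
    (fun z y => if (y \in XY) && (z \notin XY) then
                  (if z \notin X then fg_in h z y else fg_E h z y (flow h z))
                else fm_zero M).

Definition restrict_fun h (f : nat -> M) (Y : nat -> Prop) : nat -> M :=
  fun x => if x \in fcap (fg_X h) Y then f x else fm_zero M.

End FlowGraphs.

Definition setminus_X (X : {fset nat}) (Y : nat -> Prop) : nat -> Prop :=
  fun x => x \in X /\ ~ Y x.
Definition setI_N (Y Z : nat -> Prop) : nat -> Prop := fun x => Y x /\ Z x.

(* Main.v *)
Require Import Defs.
From HB Require Import structures.
From mathcomp Require Import all_boot finmap.
From Stdlib Require Import ClassicalEpsilon FunctionalExtensionality.
Set Implicit Arguments. Unset Strict Implicit.
Section S.
Variable M : flowMonoid.
Local Notation "a +m b" := (@fm_add M a b) (at level 50, left associativity).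
Local Notation m0 := (fm_zero M).
Local Notation madd := (@fm_add M).
Implicit Types (c d : nat -> M) (l m u : M).
Lemma addA' (a b c : M) : a +m (b +m c) = a +m b +m c. Proof. exact: fm_addA. Qed.
HB.instance Definition _ := Monoid.isComLaw.Build (fm_car M) m0 (@fm_add M) addA' (@fm_addC M) (@fm_add0 M).

Lemma sumM_big s (F : nat -> M) : sumM s F = \big[madd/m0]_(y <- s) F y.
Proof. elim: s => [|a s IH]; by rewrite ?big_nil ?big_cons //= IH. Qed.

Lemma addm0 (a : M) : a +m m0 = a. Proof. by rewrite fm_addC fm_add0. Qed.
Lemma mle_refl (a : M) : mle a a. Proof. by exists m0; rewrite addm0. Qed.
Lemma mle_trans (a b c : M) : mle a b -> mle b c -> mle a c.
Proof. move=> [o ->] [p ->]; exists (o +m p); by rewrite fm_addA. Qed.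
Lemma mle0 (a : M) : mle m0 a. Proof. by exists a; rewrite fm_add0. Qed.
Lemma mleD (a b c d : M) : mle a b -> mle c d -> mle (a +m c) (b +m d).
Proof. move=> [o ->] [p ->]; exists (o +m p). by rewrite Monoid.mulmACA. Qed.
Lemma mle_antisym (a b : M) : mle a b -> mle b a -> a = b.
Proof. exact: fm_le_antisym. Qed.

Lemma lub_uniq c (l1 l2 : M) : is_lub c l1 -> is_lub c l2 -> l1 = l2.
Proof. move=> [u1 m1] [u2 m2]; apply: mle_antisym; [apply: m1 u2 | apply: m2 u1]. Qed.
Lemma lubP c : ascending c -> is_lub c (lub c).
Proof. move=> /fm_lub_ex ex; exact: (epsilon_spec (inhabits m0) (is_lub c) ex). Qed.
Lemma asc_le c i j : ascending c -> i <= j -> mle (c i) (c j).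
Proof.
move=> ac; elim: j => [|j IH]; first by rewrite leqn0 => /eqP ->; exact: mle_refl.
rewrite leq_eqVlt => /orP [/eqP -> | ]; first exact: mle_refl.
rewrite ltnS => /IH h; exact: mle_trans h (ac j).
Qed.
Lemma lub_const (a : M) : is_lub (fun _ => a) a.
Proof. split=> [i|u H]; [exact: mle_refl | exact: H 0]. Qed.
Lemma asc_const (a : M) : ascending (fun _ => a).
Proof. move=> i; exact: mle_refl. Qed.
Lemma cont_mono f (a b : M) : continuous f -> mle a b -> mle (f a) (f b).
Proof.
move=> cf ab.
pose c := fun i : nat => if i is 0 then a else b.
have ac : ascending c by case=> [|i] /=; [exact: ab | exact: mle_refl].
have lc : is_lub c b.
  split; first by case=> [|i] /=; [exact: ab | exact: mle_refl].
  move=> u H; exact: H 1.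
have [H _] := cf c b ac lc; exact: H 0.
Qed.
Lemma ascD c d : ascending c -> ascending d -> ascending (fun i => c i +m d i).
Proof. move=> ac ad i; exact: mleD (ac i) (ad i). Qed.
Lemma lubD c d l m : ascending c -> ascending d -> is_lub c l -> is_lub d m ->
  is_lub (fun i => c i +m d i) (l +m m).
Proof.
move=> ac ad lc ld; split.
  move=> i; apply: mleD; [exact: lc.1 | exact: ld.1].
move=> u H.
have [_ L1] := fm_add_lub l ad ld.
apply: L1 => j.
have [_ L2] : is_lub (fun i => d j +m c i) (d j +m l) by exact: fm_add_lub.
rewrite fm_addC; apply: L2 => i; rewrite fm_addC.
apply: mle_trans (H (maxn i j)).
apply: mleD; apply: asc_le => //; [exact: leq_maxl | exact: leq_maxr].
Qed.
Lemma lub_shift c N l : ascending c -> is_lub c l <-> is_lub (fun n => c (n + N)) l.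
Proof.
move=> ac; split.
  move=> [U L]; split=> [i|u H]; first exact: U.
  apply: L => i; apply: mle_trans (H i); apply: asc_le => //; exact: leq_addr.
move=> [U L]; split=> [i|u H]; last by apply: L => i; exact: H.
apply: mle_trans (U i); apply: asc_le => //; exact: leq_addr.
Qed.

Lemma big_mle (s : seq nat) (P : pred nat) (F G : nat -> M) :
  (forall y, y \in s -> P y -> mle (F y) (G y)) ->
  mle (\big[madd/m0]_(y <- s | P y) F y) (\big[madd/m0]_(y <- s | P y) G y).
Proof.
elim: s => [|a s IH] H; first by rewrite !big_nil; exact: mle_refl.
rewrite !big_cons; case: ifP => Pa.
  apply: mleD; first by apply: H => //; rewrite inE eqxx.
  apply: IH => y ys; apply: H; by rewrite inE ys orbT.
apply: IH => y ys; apply: H; by rewrite inE ys orbT.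
Qed.

Lemma big_lub (s : seq nat) (F : nat -> nat -> M) (G : nat -> M) :
  (forall y, y \in s -> ascending (fun n => F n y)) ->
  (forall y, y \in s -> is_lub (fun n => F n y) (G y)) ->
  ascending (fun n => \big[madd/m0]_(y <- s) F n y) /\
  is_lub (fun n => \big[madd/m0]_(y <- s) F n y) (\big[madd/m0]_(y <- s) G y).
Proof.
elim: s => [|a s IH] A L.
  rewrite big_nil; have -> : (fun n => \big[madd/m0]_(y <- [::]) F n y) = fun _ => m0.
    by apply: functional_extensionality => n; rewrite big_nil.
  split; [exact: asc_const | exact: lub_const].
have [A' L'] : ascending (fun n => \big[madd/m0]_(y <- s) F n y) /\
  is_lub (fun n => \big[madd/m0]_(y <- s) F n y) (\big[madd/m0]_(y <- s) G y).
  apply: IH => y ys; [apply: A | apply: L]; by rewrite inE ys orbT.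
have -> : (fun n => \big[madd/m0]_(y <- a :: s) F n y) = fun n => F n a +m \big[madd/m0]_(y <- s) F n y.
  by apply: functional_extensionality => n; rewrite big_cons.
rewrite big_cons; split.
  apply: ascD => //; apply: A; by rewrite inE eqxx.
apply: lubD => //; [apply: A | apply: L]; by rewrite inE eqxx.
Qed.


Section Kleene.
Variable h : flowGraph M.
Hypothesis hE : forall x y, x \in fg_X h -> continuous (fg_E h x y).
Local Notation X := (fg_X h).

Definition Phi (g : nat -> M) x :=
  inflow h x +m \big[madd/m0]_(y <- enum_fset X) fg_E h y x (g y).

Lemma Phi_mono g g' x : (forall y, y \in X -> mle (g y) (g' y)) -> mle (Phi g x) (Phi g' x).
Proof.
move=> H; apply: mleD; first exact: mle_refl.
apply: big_mle => y yX _; apply: cont_mono; [exact: hE | exact: H].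
Qed.

Fixpoint iterK n : nat -> M :=
  if n is n'.+1 then fun x => if x \in X then Phi (iterK n') x else m0
  else fun _ => m0.

Lemma iterK_asc x : ascending (fun n => iterK n x).
Proof.
move=> n; elim: n x => [|n IH] x /=; first exact: mle0.
case: (x \in X); last exact: mle_refl.
apply: Phi_mono => y _; exact: IH.
Qed.

Definition fstar x := lub (fun n => iterK n x).
Lemma fstar_lub x : is_lub (fun n => iterK n x) (fstar x).
Proof. apply: lubP; exact: iterK_asc. Qed.

Lemma fstar_out x : x \notin X -> fstar x = m0.
Proof.
move=> xX; apply: (lub_uniq (fstar_lub x)).
have -> : (fun n => iterK n x) = fun _ => m0.
  by apply: functional_extensionality => -[|n] //=; rewrite (negbTE xX).
exact: lub_const.
Qed.

Lemma fstar_fix x : x \in X -> fstar x = Phi fstar x.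
Proof.
move=> xX.
have L1 : is_lub (fun n => iterK (n + 1) x) (fstar x).
  exact: (proj1 (lub_shift 1 (fstar x) (iterK_asc x))) (fstar_lub x).
have E : (fun n => iterK (n + 1) x) = fun n => Phi (iterK n) x.
  apply: functional_extensionality => n; by rewrite addn1 /= xX.
rewrite E in L1.
apply: (lub_uniq L1).
have H1 : forall y, y \in enum_fset X -> ascending (fun n => fg_E h y x (iterK n y)).
  move=> y yX n; apply: cont_mono; [exact: hE | exact: iterK_asc].
have H2 : forall y, y \in enum_fset X ->
   is_lub (fun n => fg_E h y x (iterK n y)) (fg_E h y x (fstar y)).
  move=> y yX; apply: hE => //; [exact: iterK_asc | exact: fstar_lub].
have [A L] := big_lub H1 H2.
exact: lubD (asc_const _) A (lub_const _) L.
Qed.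

Lemma fstar_least g : (forall x, x \in X -> mle (Phi g x) (g x)) ->
  forall x, x \in X -> mle (fstar x) (g x).
Proof.
move=> Hg.
have H : forall n x, x \in X -> mle (iterK n x) (g x).
  elim=> [|n IH] x xX /=; first exact: mle0.
  rewrite xX; apply: mle_trans (Hg x xX); apply: Phi_mono => y; exact: IH.
move=> x xX; have [_ L] := fstar_lub x; apply: L => n; exact: H.
Qed.

Lemma flow_lfp : is_least_flow h (flow h) /\
  forall g, (forall x, x \in X -> mle (Phi g x) (g x)) ->
  forall x, x \in X -> mle (flow h x) (g x).
Proof.
have ff : is_flow h fstar.
  split; first exact: fstar_out.
  move=> x xX; rewrite fstar_fix // sumM_big //.
have lf : is_least_flow h fstar.
  split=> // g [_ gf]; apply: fstar_least => x xX; rewrite [g x]gf // sumM_big; exact: mle_refl.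
have lflow : is_least_flow h (flow h).
  exact: (epsilon_spec (inhabits (fun _ : nat => m0)) (is_least_flow h) (ex_intro _ _ lf)).
split=> // g Hg x xX; apply: mle_trans (fstar_least Hg xX).
by apply: lflow.2 => //.
Qed.
End Kleene.

Lemma inbP (P : nat -> Prop) x : reflect (P x) (inb P x).
Proof. rewrite /inb; case: excluded_middle_informative => H; [left|right] => //. Qed.
Lemma mem_fcap (X : {fset nat}) Y x : (x \in fcap X Y) = (x \in X) && inb Y x.
Proof. by rewrite /fcap !inE. Qed.

Lemma big_uniq_eq (s1 s2 : seq nat) (P Q : pred nat) (F : nat -> M) :
  uniq s1 -> uniq s2 -> (forall z, (z \in s1) && P z = (z \in s2) && Q z) ->
  \big[madd/m0]_(z <- s1 | P z) F z = \big[madd/m0]_(z <- s2 | Q z) F z.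
Proof.
move=> u1 u2 H; rewrite -[LHS]big_filter -[RHS]big_filter; apply: perm_big.
apply: uniq_perm; [exact: filter_uniq | exact: filter_uniq | move=> z].
rewrite !mem_filter; move: (H z); case: (P z); case: (Q z); case: (z \in s1); case: (z \in s2) => //.

Qed.

Lemma psum_asc (p : pred nat) (F : nat -> M) :
  ascending (fun n => \big[madd/m0]_(z <- iota 0 n | p z) F z).
Proof. move=> n; rewrite -addn1 iotaD add0n big_cat /=; by eexists. Qed.

Lemma bound_seq (s : seq nat) : exists N, forall z, z \in s -> z < N.
Proof.
elim: s => [|a s [N HN]]; first by exists 0.
exists (maxn N a.+1) => z; rewrite inE => /orP [/eqP -> | /HN zN].
  by rewrite leq_max leqnn orbT.
by rewrite leq_max zN.
Qed.

Lemma addCA3 (a b c : M) : a +m (b +m c) = a +m c +m b.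
Proof. by rewrite -fm_addA (fm_addC b c). Qed.

Section Restr.
Variable h : flowGraph M.
Variable Y : nat -> Prop.
Hypothesis hwf : fg_wf h.
Local Notation X := (fg_X h).
Local Notation XY := (fcap (fg_X h) Y).
Local Notation hY := (restrict h Y).
Let hE := hwf.1.

Lemma XY_sub z : z \in XY -> z \in X.
Proof. by rewrite mem_fcap => /andP[]. Qed.

Lemma hYE x y : x \in fg_X hY -> continuous (fg_E hY x y).
Proof. move=> /= xXY; rewrite xXY; apply: hE; exact: XY_sub. Qed.

Lemma sumY (f : nat -> M) x :
  sumM (enum_fset (fg_X hY)) (fun z => fg_E hY z x (f z)) =
  \big[madd/m0]_(z <- enum_fset X | z \in XY) fg_E h z x (f z).
Proof.
rewrite sumM_big big_seq.
rewrite (eq_bigr (fun z => fg_E h z x (f z))); last by move=> z /= ->.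
apply: big_uniq_eq; rewrite ?fset_uniq // => z /=.
case zXY: (z \in XY); last by rewrite !andbF.
by rewrite (XY_sub zXY).
Qed.

Lemma split_sum (g : nat -> M) x :
  \big[madd/m0]_(z <- enum_fset X) fg_E h z x (g z) =
  \big[madd/m0]_(z <- enum_fset X | z \in XY) fg_E h z x (g z) +m
  \big[madd/m0]_(z <- enum_fset X | z \notin XY) fg_E h z x (g z).
Proof. by rewrite (bigID (fun z => z \in XY)). Qed.

Definition Cs x := \big[madd/m0]_(z <- enum_fset X | z \notin XY) fg_E h z x (flow h z).

Lemma inflowY y : y \in XY -> inflow hY y = inflow h y +m Cs y.
Proof.
move=> yXY.
pose P n := \big[madd/m0]_(z <- iota 0 n | z \notin X) fg_in h z y.
pose P' n := \big[madd/m0]_(z <- iota 0 n | z \notin XY) fg_in hY z y.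
have eP : inflow h y = lub P.
  rewrite /inflow; congr lub; apply: functional_extensionality => n; by rewrite sumM_big big_filter.
have eP' : inflow hY y = lub P'.
  rewrite /inflow; congr lub; apply: functional_extensionality => n; by rewrite sumM_big big_filter.
have [N HN] := bound_seq (enum_fset X).
have key : forall n, N <= n -> P' n = P n +m Cs y.
  move=> n Nn; rewrite /P' (bigID (fun z => z \in X)) /= fm_addC; congr (_ +m _).
  - apply: eq_big => z.
      case zX: (z \in X); first by rewrite andbF.
      rewrite andbT; apply/negP => /XY_sub; by rewrite zX.
    move=> /andP [zXY' zX] /=; by rewrite yXY zXY' /= zX.
  - rewrite /Cs.
    transitivity (\big[madd/m0]_(z <- iota 0 n | (z \notin XY) && (z \in X)) fg_E h z y (flow h z)).
      apply: eq_bigr => z /andP [zn zX] /=; by rewrite yXY zn /= zX.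
    apply: big_uniq_eq; rewrite ?fset_uniq ?iota_uniq // => z.
    case zX: (z \in X); last by rewrite !andbF.
    rewrite andbT mem_iota add0n (leq_trans (HN z zX) Nn) //.
have aP : ascending P by exact: psum_asc.
have aP' : ascending P' by exact: psum_asc.
have L : is_lub (fun n => P n +m Cs y) (inflow h y +m Cs y).
  rewrite eP; exact: lubD aP (asc_const _) (lubP aP) (lub_const _).
have L' : is_lub P' (inflow h y +m Cs y).
  apply: (proj2 (lub_shift N _ aP')).
  have -> : (fun n => P' (n + N)) = fun n => P (n + N) +m Cs y.
    apply: functional_extensionality => n; apply: key; exact: leq_addl.
  exact: (proj1 (lub_shift N _ (ascD aP (asc_const (Cs y))))) L.
rewrite eP'; exact: lub_uniq (lubP aP') L'.
Qed.

Lemma flowh_out z : z \notin X -> flow h z = m0.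
Proof. exact: (flow_lfp hE).1.1.1. Qed.
Lemma flowh_eq x : x \in X ->
  flow h x = inflow h x +m \big[madd/m0]_(z <- enum_fset X) fg_E h z x (flow h z).
Proof. move=> xX; rewrite -sumM_big; exact: (flow_lfp hE).1.1.2. Qed.

Local Notation rf := (restrict_fun h (flow h) Y).

Lemma rf_flow : is_flow hY rf.
Proof.
split.
  move=> x /= xn; by rewrite /restrict_fun (negbTE xn).
move=> x /= xXY; rewrite sumY inflowY // {1}/restrict_fun xXY flowh_eq ?XY_sub // split_sum.
have -> : \big[madd/m0]_(z <- enum_fset X | z \in XY) fg_E h z x (rf z) =
          \big[madd/m0]_(z <- enum_fset X | z \in XY) fg_E h z x (flow h z).
  by apply: eq_bigr => z zXY; rewrite /restrict_fun zXY.
by rewrite addCA3.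
Qed.

Lemma dir1 x : x \in XY -> mle (flow hY x) (flow h x).
Proof.
move=> xXY; have := (flow_lfp hYE).1.2 rf rf_flow x xXY.
by rewrite /restrict_fun xXY.
Qed.

Lemma dir2 x : x \in XY -> mle (flow h x) (flow hY x).
Proof.
move=> xXY.
pose g' z := if z \in XY then flow hY z else flow h z.
suff pre : forall y, y \in X -> mle (Phi h g' y) (g' y).
  have := (flow_lfp hE).2 g' pre x (XY_sub xXY); by rewrite /g' xXY.
move=> y yX; rewrite /Phi split_sum.
have -> : \big[madd/m0]_(w <- enum_fset X | w \in XY) fg_E h w y (g' w) =
          \big[madd/m0]_(w <- enum_fset X | w \in XY) fg_E h w y (flow hY w).
  by apply: eq_bigr => w wXY; rewrite /g' wXY.
have -> : \big[madd/m0]_(w <- enum_fset X | w \notin XY) fg_E h w y (g' w) = Cs y.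
  by apply: eq_bigr => w wXY; rewrite /g' (negbTE wXY).
rewrite /g'; case: ifP => yXY.
  rewrite [flow hY y](flow_lfp hYE).1.1.2 // sumY inflowY // addCA3; exact: mle_refl.
rewrite flowh_eq // split_sum; apply: mleD; first exact: mle_refl.
apply: mleD; last exact: mle_refl.
apply: big_mle => w wX wXY; apply: cont_mono; [exact: hE | exact: dir1].
Qed.

Lemma flow_restrict : flow hY = rf.
Proof.
apply: functional_extensionality => x.
case: (boolP (x \in XY)) => xXY.
  rewrite /restrict_fun xXY; apply: mle_antisym; [exact: dir1 | exact: dir2].
rewrite /restrict_fun (negbTE xXY); exact: (flow_lfp hYE).1.1.1.
Qed.
End Restr.
End S.

Lemma inb_setminus (X : {fset nat}) Y x : x \in X -> inb (setminus_X X Y) x = ~~ inb Y x.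
Proof.
move=> xX; apply/idP/idP.
  move/inbP => [_ nY]; apply/negP => /inbP; exact: nY.
move=> nY; apply/inbP; split => // yY; move/inbP: yY; by rewrite (negbTE nY).
Qed.
Lemma inb_setI Y Z x : inb (setI_N Y Z) x = inb Y x && inb Z x.
Proof.
apply/idP/idP.
  by move/inbP => [/inbP -> /inbP ->].
by move=> /andP [/inbP a /inbP b]; apply/inbP.
Qed.

Theorem lemma4 (M : flowMonoid) (h : flowGraph M) (Y Z : nat -> Prop) :
  fg_wf h ->
  flow (restrict h Y) = restrict_fun h (flow h) Y /\
  (fg_sep (restrict h Y) (restrict h (setminus_X (fg_X h) Y)) /\
   fg_star (restrict h Y) (restrict h (setminus_X (fg_X h) Y)) = Some h) /\
  restrict (restrict h Y) Z = restrict h (setI_N Y Z).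
Proof.
move=> hwf.
have Fi := flow_restrict Y hwf.
split; first exact: Fi.
split; last first.
  rewrite [restrict (restrict h Y) Z]/restrict /=.
  rewrite Fi /restrict /=.
  have eX : fcap (fcap (fg_X h) Y) Z = fcap (fg_X h) (setI_N Y Z).
    by apply/fsetP => x; rewrite !mem_fcap inb_setI andbA.
  rewrite eX; congr FlowGraph.
    apply: functional_extensionality => x; apply: functional_extensionality => y.
    rewrite !mem_fcap inb_setI.
    by case: (x \in fg_X h); case: (inb Y x); case: (inb Z x).
  apply: functional_extensionality => z; apply: functional_extensionality => y.
  rewrite /restrict_fun !mem_fcap !inb_setI /zerof.
  by case: (y \in fg_X h); case: (inb Y y); case: (inb Z y);
     case: (z \in fg_X h); case: (inb Y z); case: (inb Z z).
have Fi' := flow_restrict (setminus_X (fg_X h) Y) hwf.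
have hout := flowh_out hwf.
have U : fg_union (restrict h Y) (restrict h (setminus_X (fg_X h) Y)) = h.
  move: hwf Fi Fi' hout; case: h => X E inn [_ [hE0 hin0]] _ _ hout /=.
  rewrite /fg_union /restrict /=; congr FlowGraph.
  - apply/fsetP => x; rewrite !inE.
    case xX: (x \in X) => //=; rewrite inb_setminus //; by case: inb.
  - apply: functional_extensionality => x; apply: functional_extensionality => y.
    rewrite !mem_fcap; case xX: (x \in X) => /=; last by move: (hE0 x y) => /= ->; rewrite ?xX.
    rewrite inb_setminus //; by case: inb.
  - apply: functional_extensionality => z; apply: functional_extensionality => x.
    rewrite !inE.
    case xX: (x \in X); case zX: (z \in X); rewrite /= ?inb_setminus //;
      try case: (inb Y x); try case: (inb Y z) => /=;
      first [ done | symmetry; apply: hin0; by rewrite ?zX ?xX ].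
have C : compat (restrict h Y) (restrict h (setminus_X (fg_X h) Y)).
  split.
    apply/fsetP => x; rewrite !inE /=.
    case xX: (x \in fg_X h) => //=; rewrite inb_setminus //; by case: inb.
  move=> x y /=; rewrite !mem_fcap => /andP [xX xY] /andP [yX yY'].
  rewrite inb_setminus // in yY'.
  rewrite /outflow Fi Fi' /restrict_fun /= !mem_fcap !inb_setminus // xX yX xY (negbTE yY') /=.
  done.
have S : fg_sep (restrict h Y) (restrict h (setminus_X (fg_X h) Y)).
  split => //; rewrite U; apply: functional_extensionality => x.
  rewrite /flow_union Fi Fi' /restrict_fun /= !mem_fcap.
  case xX: (x \in fg_X h) => /=; last by rewrite hout ?xX.
  rewrite inb_setminus //; by case: inb.
split => //; rewrite /fg_star; destruct (excluded_middle_informative _) as [s0|nS]; [by rewrite U | by case: (nS S)].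
Qed.
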